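(* Let $\alpha_0=(X_0,\beta_0,\tau_0)$ be a non-saturated pre-action of $\Gamma=\mathrm{BS}(m,n)$, let $x\in X_0$, and let $\alpha$ be a one orbit free $\mathtt r$-extension of $(\alpha_0,x)$ (for some transfer rule $\mathtt r$), with new $\beta$-orbit containing the chosen point $y$, of cardinality $L_y$. Let $\varepsilon=1$ if the extension is positive and $\varepsilon=-1$ if negative. Let $x_0\in X_0$ lie in the same connected component of $\mathrm{Sch}(\alpha_0)$ as $x$, and let $c$ be any path from $x_0$ to $x$ in $\mathrm{Sch}(\alpha_0)$. Then: (1) if $L_y<\infty$, $\mathrm{Stab}_\alpha(x_0)=\langle\mathrm{Stab}_{\alpha_0}(x_0),\ \Psi(c)\,t^{\varepsilon}b^{L_y}t^{-\varepsilon}\,\Psi(c)^{-1}\rangle$; (2) if $L_y=\infty$, or if the extension is maximal (i.e. $L_y=|m|L_x/\gcd(L_x,n)$ when positive and $L_y=|n|L_x/\gcd(L_x,m)$ when negative, where $L_x=|x\langle\beta_0\rangle|$), then $\mathrm{Stab}_\alpha(x_0)=\mathrm{Stab}_{\alpha_0}(x_0)$.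
   Context: $\mathrm{BS}(m,n)=\langle b,t\mid tb^mt^{-1}=b^n\rangle$, $|m|,|n|\ge2$; maps act on the right. A pre-action is $(X,\beta,\tau)$ with $\beta$ a bijection of $X$, $\tau$ a partial bijection with $\beta^n$-invariant domain, $\beta^m$-invariant range, and $x\tau\beta^m=x\beta^n\tau$ on $\mathrm{dom}(\tau)$; saturated means $\mathrm{dom}(\tau)=\mathrm{rng}(\tau)=X$. Its Schreier graph $\mathrm{Sch}(\alpha)$ has vertex set $X$, a $b$-labelled edge $x\to x\beta$ (with opposite $b^{-1}$-edge) for all $x$, and a $t$-labelled edge $x\to x\tau$ (with opposite $t^{-1}$-edge) for $x\in\mathrm{dom}(\tau)$. For a path $c$, $\Psi(c)\in\Gamma$ is the element represented by the word read along $c$ (so the endpoint of $c$ is the start point acted on by $\Psi(c)$). $\mathrm{Stab}_\alpha(x_0)$ is the image of $\pi_1(\mathrm{Sch}(\alpha),x_0)$ under $\Psi$. Transfer rule: a map $\mathtt r:(\mathbb{Z}_{\ge1}\cup\{\infty\})\times\{\pm\}\to\mathbb{Z}_{\ge1}\cup\{\infty\}$ with $L'=\mathtt r(L,\epsilon)$ satisfying $L/\gcd(L,n)=L'/\gcd(L',m)$ if $\epsilon=+$, $L/\gcd(L,m)=L'/\gcd(L',n)$ if $\epsilon=-$ ($\gcd(\infty,k)=|k|$; infinite on one side means infinite on both). One orbit free $\mathtt r$-extension of $(\alpha_0,x)$, $L=|x\langle\beta_0\rangle|$: positive (if $x\notin\mathrm{dom}(\tau_0)$): adjoin a new set $O'$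 of size $L'=\mathtt r(L,+)$ carrying a transitive permutation $\beta'$ (an $L'$-cycle, or a $\mathbb{Z}$-translation if infinite), pick $y\in O'$, extend $\beta_0$ by $\beta'$ and $\tau_0$ by $x\beta_0^{jn}\mapsto y\beta'^{jm}$ ($j\in\mathbb{Z}$); negative (if $x\notin\mathrm{rng}(\tau_0)$): same with $L'=\mathtt r(L,-)$ and $\tau_0$ extended by $y\beta'^{jn}\mapsto x\beta_0^{jm}$. *)

(* Defs.v *)
(* Baumslag-Solitar group BS(m,n) as words modulo the
   congruence generated by free cancellation and t b^m t^-1 = b^n. *)
From mathcomp Require Import all_boot all_order all_algebra.
Set Implicit Arguments. Unset Strict Implicit. Unset Printing Implicit Defensive.

Inductive letter := Lb | Lbi | Lt | Lti.
Definition word := seq letter.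

Definition linv (a : letter) : letter :=
  match a with Lb => Lbi | Lbi => Lb | Lt => Lti | Lti => Lt end.
Definition winv (w : word) : word := rev (map linv w).

Definition bword (k : int) : word :=
  match k with Posz p => nseq p Lb | Negz p => nseq p.+1 Lbi end.

Inductive bs_eq (m n : int) : word -> word -> Prop :=
| bs_refl w : bs_eq m n w w
| bs_sym u v : bs_eq m n u v -> bs_eq m n v u
| bs_trans u v w : bs_eq m n u v -> bs_eq m n v w -> bs_eq m n u w
| bs_cancel u v a : bs_eq m n (u ++ [:: a; linv a] ++ v) (u ++ v)
| bs_rel u v : bs_eq m n (u ++ (Lt :: bword m ++ [:: Lti]) ++ v) (u ++ bword n ++ v).

Definition is_subgroup (m n : int) (H : word -> Prop) : Prop :=
  [/\ H [::], (forall u v, H u -> H v -> H (u ++ v)),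
      (forall u, H u -> H (winv u)) & (forall u v, bs_eq m n u v -> H u -> H v)].

Definition gen_sub (m n : int) (S : word -> Prop) (h : word) (g : word) : Prop :=
  forall H, is_subgroup m n H -> (forall s, S s -> H s) -> H h -> H g.

(* integer powers of a bijection f with inverse g; maps act on the right *)
Definition bpow {X : Type} (f g : X -> X) (k : int) (x : X) : X :=
  match k with Posz p => iter p f x | Negz p => iter p.+1 g x end.

Section PreAction.
Variables (X : Type) (m n : int) (beta betai : X -> X) (tau : X -> X -> Prop).
(* tau is the graph of a partial map *)
Definition pdom (a : X) : Prop := exists b, tau a b.
Definition prng (b : X) : Prop := exists a, tau a b.

Definition is_preaction : Prop :=
  [/\ cancel beta betai, cancel betai beta,
      (forall a b c, tau a b -> tau a c -> b = c) &
      (forall a b c, tau a c -> tau b c -> a = b)] /\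
  [/\ (forall a, pdom a <-> pdom (bpow beta betai n a)),
      (forall a, prng a <-> prng (bpow beta betai m a)) &
      (forall a b, tau a b -> tau (bpow beta betai n a) (bpow beta betai m b))].

Definition saturated : Prop := forall a, pdom a /\ prng a.

Inductive walk : X -> word -> X -> Prop :=
| walk_nil x : walk x [::] x
| walk_b x w y : walk (beta x) w y -> walk x (Lb :: w) y
| walk_bi x w y : walk (betai x) w y -> walk x (Lbi :: w) y
| walk_t x x' w y : tau x x' -> walk x' w y -> walk x (Lt :: w) y
| walk_ti x x' w y : tau x' x -> walk x' w y -> walk x (Lti :: w) y.

(* Stab(x0) = Psi(pi_1(Sch, x0)), as a bs_eq-closed set of words *)
Definition Stab (x0 : X) (g : word) : Prop :=
  exists w, walk x0 w x0 /\ bs_eq m n w g.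
End PreAction.

(* cardinalities in Z_{>=1} \cup {oo} *)
Inductive ccard := Fin of nat | Inf.
Definition valid_card (c : ccard) : Prop :=
  match c with Fin k => (0 < k)%N | Inf => True end.

(* L / gcd(L,k), with gcd(oo,k) = |k| and oo/|k| = oo *)
Definition cdivg (L : ccard) (k : int) : ccard :=
  match L with Fin a => Fin (a %/ gcdn a `|k|) | Inf => Inf end.

(* transfer rule; the bool is the sign (true = +, false = -) *)
Definition transfer_rule (m n : int) (r : ccard -> bool -> ccard) : Prop :=
  forall L, valid_card L ->
    [/\ valid_card (r L true), cdivg L n = cdivg (r L true) m,
        valid_card (r L false) & cdivg L m = cdivg (r L false) n].

Definition orbit_card {X : Type} (f g : X -> X) (x : X) (c : ccard) : Prop :=
  match c with
  | Fin k => (0 < k)%N /\ iter k f x = x /\ (forall j, (0 < j < k)%N -> iter j f x <> x)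
  | Inf => forall k : int, k != 0%R -> bpow f g k x <> x
  end.

(* one orbit free extension: new points form the type O, X = X0 + O *)
Section Extension.
Variables (m n : int) (X0 O : Type) (beta0 betai0 : X0 -> X0)
  (tau0 : X0 -> X0 -> Prop) (beta' betai' : O -> O) (x : X0) (y : O) (eps : bool).

Definition ext_beta (u : X0 + O) : X0 + O :=
  match u with inl a => inl (beta0 a) | inr o => inr (beta' o) end.
Definition ext_betai (u : X0 + O) : X0 + O :=
  match u with inl a => inl (betai0 a) | inr o => inr (betai' o) end.

(* eps = true: positive extension  x beta0^{jn} |-> y beta'^{jm};
   eps = false: negative extension y beta'^{jn} |-> x beta0^{jm} *)
Definition ext_tau (u v : X0 + O) : Prop :=
  match u, v with
  | inl a, inl b => tau0 a b
  | inl a, inr c => eps /\ exists j : int,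
       a = bpow beta0 betai0 (j * n)%R x /\ c = bpow beta' betai' (j * m)%R y
  | inr c, inl a => eps = false /\ exists j : int,
       c = bpow beta' betai' (j * n)%R y /\ a = bpow beta0 betai0 (j * m)%R x
  | inr _, inr _ => False
  end.
End Extension.

(* Main.v *)
Require Import Defs.
From mathcomp Require Import all_boot all_order all_algebra zify ring.

Module Helpers.
Set Implicit Arguments. Unset Strict Implicit. Unset Printing Implicit Defensive.
Import GRing.Theory Num.Theory.
Local Open Scope ring_scope.


Section Words.
Variables (m n : int).
Notation eqw := (bs_eq m n).

Lemma eqw_ctx u v a b : eqw u v -> eqw (a ++ u ++ b) (a ++ v ++ b).
Proof.
elim=> {u v}.
- by move=> w; apply: bs_refl.
- by move=> u v _ IH; apply: bs_sym.
- by move=> u v w _ IH1 _ IH2; apply: bs_trans IH2.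
- move=> u v x. have := bs_cancel m n (a ++ u) (v ++ b) x. by rewrite -!catA.
- move=> u v. have := bs_rel m n (a ++ u) (v ++ b). by rewrite -!catA.
Qed.

Lemma eqw_cat a a' b b' : eqw a a' -> eqw b b' -> eqw (a ++ b) (a' ++ b').
Proof.
move=> H1 H2. apply: (bs_trans (v := a' ++ b)).
- by have := eqw_ctx [::] b H1.
- have := eqw_ctx a' [::] H2. by rewrite !cats0.
Qed.

Lemma eqw_catl a b b' : eqw b b' -> eqw (a ++ b) (a ++ b').
Proof. by move=> H; apply: eqw_cat => //; apply: bs_refl. Qed.
Lemma eqw_catr a a' b : eqw a a' -> eqw (a ++ b) (a' ++ b).
Proof. by move=> H; apply: eqw_cat => //; apply: bs_refl. Qed.

Lemma linvK : involutive linv. Proof. by case. Qed.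

Lemma winv_cat u v : winv (u ++ v) = winv v ++ winv u.
Proof. by rewrite /winv map_cat rev_cat. Qed.
Lemma winvK : involutive winv.
Proof. by move=> u; rewrite /winv map_rev revK -map_comp (eq_map linvK) map_id. Qed.
Lemma winv_cons a u : winv (a :: u) = winv u ++ [:: linv a].
Proof. by rewrite -cat1s winv_cat. Qed.

Lemma eqw_inv_r w : eqw (w ++ winv w) [::].
Proof.
elim: w => [|a w IH] /=; first by apply: bs_refl.
rewrite winv_cons catA -cat_rcons.
apply: (bs_trans (v := [:: a; linv a])); last first.
  by have := bs_cancel m n [::] [::] a; rewrite /= .
have := eqw_ctx [:: a] [:: linv a] IH. by rewrite /= cat_rcons.
Qed.

Lemma eqw_inv_l w : eqw (winv w ++ w) [::].
Proof. by have := eqw_inv_r (winv w); rewrite winvK. Qed.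

Lemma eqw_rel : eqw (Lt :: bword m ++ [:: Lti]) (bword n).
Proof. by have := bs_rel m n [::] [::]; rewrite /= !cats0. Qed.

End Words.
Arguments eqw_ctx {m n u v}. Arguments eqw_cat {m n a a' b b'}.
Arguments eqw_catl {m n} a {b b'}. Arguments eqw_catr {m n a a'} b.
Arguments eqw_inv_r {m n}. Arguments eqw_inv_l {m n}. Arguments eqw_rel {m n}.


Section Sub.
Variables (m n : int) (H : word -> Prop) (HH : is_subgroup m n H).
Lemma H_nil : H [::]. Proof. by case: HH. Qed.
Lemma H_cat u v : H u -> H v -> H (u ++ v). Proof. by case: HH => _ h _ _; apply: h. Qed.
Lemma H_inv u : H u -> H (winv u). Proof. by case: HH => _ _ h _; apply: h. Qed.
Lemma H_eq u v : bs_eq m n u v -> H u -> H v. Proof. by case: HH => _ _ _ h; apply: h. Qed.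
End Sub.
Arguments H_nil {m n H} HH. Arguments H_cat {m n H} HH {u v}.
Arguments H_inv {m n H} HH {u}. Arguments H_eq {m n H} HH {u v}.


Lemma int_ind3 (P : int -> Prop) : P 0 -> (forall k, P k -> P (k + 1)) ->
  (forall k, P k -> P (k - 1)) -> forall k, P k.
Proof.
move=> P0 Hs Hp [p|p].
- elim: p => [//|p IH]. have -> : Posz p.+1 = Posz p + 1 by lia. exact: Hs.
- elim: p => [|p IH]. have -> : Negz 0 = 0 - 1 by lia. exact: Hp.
  have -> : Negz p.+1 = Negz p - 1 by lia. exact: Hp.
Qed.

Section Bpow.
Variables (X : Type) (f g : X -> X) (fK : cancel f g) (gK : cancel g f).

Lemma bpowS k z : bpow f g (k + 1) z = f (bpow f g k z).
Proof.
case: k => [p|[|p]].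
- have -> : Posz p + 1 = Posz p.+1 by lia. by [].
- have -> : Negz 0 + 1 = 0 by lia. by rewrite /= gK.
- have -> : Negz p.+1 + 1 = Negz p by lia. by rewrite /= gK.
Qed.

Lemma bpowP k z : bpow f g (k - 1) z = g (bpow f g k z).
Proof.
case: k => [[|p]|p].
- have -> : Posz 0 - 1 = Negz 0 by lia. by [].
- have -> : Posz p.+1 - 1 = Posz p by lia. by rewrite /= fK.
- have -> : Negz p - 1 = Negz p.+1 by lia. by [].
Qed.

Lemma bpow0 z : bpow f g 0 z = z. Proof. by []. Qed.

Lemma bpowD a b z : bpow f g (a + b) z = bpow f g b (bpow f g a z).
Proof.
elim/int_ind3: b.
- by rewrite addr0.
- move=> k IH. by rewrite addrA !bpowS IH.
- move=> k IH. by rewrite addrA !bpowP IH.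
Qed.

Lemma bpowNK k z : bpow f g (- k) (bpow f g k z) = z.
Proof. by rewrite -bpowD subrr. Qed.

Lemma bpow_mul k z : (0 < k)%N -> iter k f z = z -> forall q : int, bpow f g (q * k%:Z) z = z.
Proof.
move=> k0 Hk. elim/int_ind3.
- by rewrite mul0r.
- move=> q IH. by rewrite mulrDl mul1r bpowD IH.
- move=> q IH. rewrite mulrBl mul1r bpowD IH.
  by rewrite -{1}Hk -[iter k f z]/(bpow f g k%:Z z) bpowNK.
Qed.

Lemma orbit_fin k z d : orbit_card f g z (Fin k) -> bpow f g d z = z ->
  exists q : int, d = q * k%:Z.
Proof.
move=> [k0 [Hk Hmin]] Hd.
have kn0 : (k%:Z != 0) by lia.
exists (d %/ k%:Z)%Z.
have E := divz_eq d k%:Z.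
have r0 := modz_ge0 d kn0. have rk := ltz_mod d kn0.
move: Hd; rewrite {1}E bpowD bpow_mul //.
case Er: (d %% k%:Z)%Z r0 rk => [r|r] //= _ rk Hr.
have : r = 0%N.
  case: r Hr rk Er => // r Hr rk _. exfalso. apply: (Hmin r.+1) Hr. lia.
move=> r0'. rewrite {1}E Er r0'. by rewrite addr0.
Qed.

End Bpow.


Section BW.
Variables (m n : int).
Notation eqw := (bs_eq m n).

Lemma eqw_ins a b x : eqw (a ++ b) (a ++ [:: x; linv x] ++ b).
Proof. apply: bs_sym; exact: bs_cancel. Qed.

Lemma nseqSr k (a : letter) : nseq k.+1 a = nseq k a ++ [:: a].
Proof. by elim: k => //= k <-. Qed.
Lemma bword_pos p : bword (Posz p) = nseq p Lb. Proof. by []. Qed.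
Lemma bword_neg p : bword (Negz p) = nseq p.+1 Lbi. Proof. by []. Qed.

Lemma bwordS k : eqw (bword (k + 1)) (bword k ++ [:: Lb]).
Proof.
case: k => [p|[|p]].
- have -> : Posz p + 1 = Posz p.+1 by lia. rewrite !bword_pos nseqSr.
  exact: bs_refl.
- have -> : Negz 0 + 1 = 0 by lia. apply: bs_sym.
  by have := bs_cancel m n [::] [::] Lbi.
- have -> : Negz p.+1 + 1 = Negz p by lia. rewrite !bword_neg [nseq p.+2 _]nseqSr.
  rewrite -catA. have := eqw_ins (nseq p.+1 Lbi) [::] Lbi. by rewrite cats0.
Qed.

Lemma bwordP k : eqw (bword (k - 1)) (bword k ++ [:: Lbi]).
Proof.
case: k => [[|p]|p].
- have -> : Posz 0 - 1 = Negz 0 by lia. exact: bs_refl.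
- have -> : Posz p.+1 - 1 = Posz p by lia. rewrite !bword_pos [nseq p.+1 _]nseqSr.
  rewrite -catA. have := eqw_ins (nseq p Lb) [::] Lb. by rewrite cats0.
- have -> : Negz p - 1 = Negz p.+1 by lia. rewrite !bword_neg [nseq p.+2 _]nseqSr.
  exact: bs_refl.
Qed.

Lemma bwordD a b : eqw (bword (a + b)) (bword a ++ bword b).
Proof.
elim/int_ind3: b.
- rewrite addr0 cats0. exact: bs_refl.
- move=> k IH. rewrite addrA. eapply bs_trans; first exact: bwordS.
  eapply bs_trans; first exact: (eqw_catr _ IH). rewrite -catA. apply: eqw_catl.
  apply: bs_sym; exact: bwordS.
- move=> k IH. rewrite addrA. eapply bs_trans; first exact: bwordP.
  eapply bs_trans; first exact: (eqw_catr _ IH). rewrite -catA. apply: eqw_catl.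
  apply: bs_sym; exact: bwordP.
Qed.

Lemma winv_nseq k a : winv (nseq k a) = nseq k (linv a).
Proof. by rewrite /winv map_nseq rev_nseq. Qed.

Lemma winv_bword k : winv (bword k) = bword (- k).
Proof.
case: k => [[|p]|p].
- by [].
- have -> : - Posz p.+1 = Negz p by lia. by rewrite bword_pos bword_neg winv_nseq.
- have -> : - Negz p = Posz p.+1 by lia. by rewrite bword_pos bword_neg winv_nseq.
Qed.

Lemma eqw_winv u v : eqw u v -> eqw (winv u) (winv v).
Proof.
move=> H.
apply: (bs_trans (v := winv u ++ (v ++ winv v))).
  have := eqw_catl (winv u) (bs_sym (eqw_inv_r v)). by rewrite cats0.
apply: (bs_trans (v := winv u ++ (u ++ winv v))).
  apply: eqw_catl. apply: eqw_catr. exact: bs_sym.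
rewrite catA. have := eqw_catr (winv v) (eqw_inv_l u). by [].
Qed.

Lemma rel_mul e p q : eqw ([:: e] ++ bword p ++ [:: linv e]) (bword q) ->
  forall J : int, eqw ([:: e] ++ bword (J * p) ++ [:: linv e]) (bword (J * q)).
Proof.
move=> Hr. elim/int_ind3.
- rewrite !mul0r /=. have := bs_cancel m n [::] [::] e. by [].
- move=> J IH. rewrite !mulrDl !mul1r.
  eapply bs_trans; first exact: (eqw_catl _ (eqw_catr _ (bwordD _ _))).
  eapply bs_trans; last exact: (bs_sym (bwordD _ _)).
  have E : [:: e] ++ (bword (J * p) ++ bword p) ++ [:: linv e] =
     ([:: e] ++ bword (J * p)) ++ [::] ++ (bword p ++ [:: linv e]) by rewrite -!catA.
  rewrite E. eapply bs_trans; first exact: (eqw_ins _ _ (linv e)). rewrite linvK.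
  have E2 : ([:: e] ++ bword (J * p)) ++ [:: linv e; e] ++ bword p ++ [:: linv e] =
   ([:: e] ++ bword (J * p) ++ [:: linv e]) ++ ([:: e] ++ bword p ++ [:: linv e]) by rewrite -!catA.
  rewrite E2. exact: eqw_cat.
- move=> J IH. rewrite !mulrBl !mul1r.
  eapply bs_trans; first exact: (eqw_catl _ (eqw_catr _ (bwordD _ _))).
  eapply bs_trans; last exact: (bs_sym (bwordD _ _)).
  have E : [:: e] ++ (bword (J * p) ++ bword (- p)) ++ [:: linv e] =
     ([:: e] ++ bword (J * p)) ++ [::] ++ (bword (-p) ++ [:: linv e]) by rewrite -!catA.
  rewrite E. eapply bs_trans; first exact: (eqw_ins _ _ (linv e)). rewrite linvK.
  have E2 : ([:: e] ++ bword (J * p)) ++ [:: linv e; e] ++ bword (-p) ++ [:: linv e] =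
   ([:: e] ++ bword (J * p) ++ [:: linv e]) ++ ([:: e] ++ bword (-p) ++ [:: linv e]) by rewrite -!catA.
  rewrite E2. apply: eqw_cat => //.
  rewrite -!winv_bword.
  have -> : [:: e] ++ winv (bword p) ++ [:: linv e] = winv ([:: e] ++ bword p ++ [:: linv e]).
    by rewrite !winv_cat /= /winv /= linvK.
  exact: eqw_winv.
Qed.
End BW.
Arguments bwordD {m n}. Arguments bwordS {m n}. Arguments bwordP {m n}.
Arguments eqw_ins {m n}. Arguments eqw_winv {m n u v}.


Section Walks.
Variables (X : Type) (beta betai : X -> X) (tau : X -> X -> Prop).
Hypotheses (fK : cancel beta betai) (gK : cancel betai beta).
Notation walk := (walk beta betai tau).

Lemma walk_cat a u b v c : walk a u b -> walk b v c -> walk a (u ++ v) c.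
Proof.
elim=> {a u b} /=.
- by [].
- move=> x w y _ IH Hv. apply: walk_b. exact: IH.
- move=> x w y _ IH Hv. apply: walk_bi. exact: IH.
- move=> x x' w y Ht _ IH Hv. apply: walk_t Ht _. exact: IH.
- move=> x x' w y Ht _ IH Hv. apply: walk_ti Ht _. exact: IH.
Qed.

Lemma walk_rev a u b : walk a u b -> walk b (winv u) a.
Proof.
elim=> {a u b}.
- move=> x; exact: walk_nil.
- move=> x w y _ IH. rewrite winv_cons. apply: walk_cat IH _.
  apply: walk_bi. rewrite fK. exact: walk_nil.
- move=> x w y _ IH. rewrite winv_cons. apply: walk_cat IH _.
  apply: walk_b. rewrite gK. exact: walk_nil.
- move=> x x' w y Ht _ IH. rewrite winv_cons. apply: walk_cat IH _.
  apply: walk_ti Ht _. exact: walk_nil.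
- move=> x x' w y Ht _ IH. rewrite winv_cons. apply: walk_cat IH _.
  apply: walk_t Ht _. exact: walk_nil.
Qed.

Lemma walk_nseqb k z : walk z (nseq k Lb) (iter k beta z).
Proof.
elim: k z => [|k IH] z /=; first exact: walk_nil.
apply: walk_b. rewrite -iterS iterSr. exact: IH.
Qed.
Lemma walk_nseqbi k z : walk z (nseq k Lbi) (iter k betai z).
Proof.
elim: k z => [|k IH] z /=; first exact: walk_nil.
apply: walk_bi. rewrite -iterS iterSr. exact: IH.
Qed.

Lemma walk_bword k z : walk z (bword k) (bpow beta betai k z).
Proof. case: k => p; [exact: walk_nseqb | exact: walk_nseqbi]. Qed.

Variables (m n : int).
Lemma Stab_sub x0 : is_subgroup m n (Stab m n beta betai tau x0).
Proof.
split.
- exists [::]; split; [exact: walk_nil | exact: bs_refl].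
- move=> u v [w [Hw Eu]] [w' [Hw' Ev]]. exists (w ++ w'); split.
  + exact: walk_cat Hw Hw'.
  + exact: eqw_cat.
- move=> u [w [Hw Eu]]. exists (winv w); split; first exact: walk_rev.
  exact: eqw_winv.
- move=> u v Huv [w [Hw Ew]]. exists w; split => //. exact: bs_trans Huv.
Qed.
End Walks.


Section Main.
Variables (m n : int) (X0 O : Type) (beta0 betai0 : X0 -> X0)
  (tau0 : X0 -> X0 -> Prop) (beta' betai' : O -> O) (x : X0) (y : O) (eps : bool).
Hypotheses (fK0 : cancel beta0 betai0) (gK0 : cancel betai0 beta0)
  (fK' : cancel beta' betai') (gK' : cancel betai' beta').
Variables (x0 : X0) (H : word -> Prop).
Hypothesis HH : is_subgroup m n H.
Hypothesis HS : forall s, Stab m n beta0 betai0 tau0 x0 s -> H s.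
Notation e := (if eps then Lt else Lti).
Notation p := (if eps then m else n).
Notation q := (if eps then n else m).
Notation eqw := (bs_eq m n).
Notation walk0 := (walk beta0 betai0 tau0).
Hypothesis Hrel : eqw ([:: e] ++ bword p ++ [:: linv e]) (bword q).
Hypothesis HO : forall u d, walk0 x0 u x -> bpow beta' betai' d y = y ->
  H (u ++ [:: e] ++ bword d ++ [:: linv e] ++ winv u).

Definition Good (P : X0 + O) (g : word) : Prop :=
  match P with
  | inl z => exists u, walk0 x0 u z /\ H (g ++ winv u)
  | inr o => exists u s, walk0 x0 u x /\ o = bpow beta' betai' s y /\
       H (g ++ bword (- s) ++ [:: linv e] ++ winv u)
  end.

Lemma Heq u v : eqw v u -> H u -> H v.
Proof. move=> E Hu; exact: (H_eq HH (bs_sym E) Hu). Qed.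

Lemma good_old z z' g l : Good (inl z) g -> walk0 z [:: l] z' -> Good (inl z') (g ++ [:: l]).
Proof.
move=> [u [Hu Hg]] Hl. exists (u ++ [:: l]); split; first exact: walk_cat Hu Hl.
apply: Heq Hg. rewrite winv_cat /= -catA /=.
exact: (bs_cancel m n g (winv u) l).
Qed.

Lemma good_fwd z o g j : Good (inl z) g -> z = bpow beta0 betai0 (j * q) x ->
  o = bpow beta' betai' (j * p) y -> Good (inr o) (g ++ [:: e]).
Proof.
move=> [u [Hu Hg]] Hz Ho. exists (u ++ bword (- (j * q))), (j * p); split.
  apply: walk_cat Hu _. have := walk_bword beta0 betai0 tau0 (- (j * q)) z.
  by rewrite Hz bpowNK.
split => //.
apply: Heq Hg. rewrite winv_cat winv_bword opprK.
have R := rel_mul Hrel (- j). rewrite !mulNr in R.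
apply: (bs_trans (v := g ++ (bword (- (j * q)) ++ bword (j * q)) ++ winv u)); last first.
  apply: eqw_catl. have := eqw_catr (winv u) (eqw_inv_l (bword (j * q))).
  by rewrite winv_bword.
rewrite -!catA. apply: eqw_catl. rewrite !catA. apply: eqw_catr. apply: eqw_catr.
by rewrite -!catA.
Qed.

Lemma good_bwd o a g j : Good (inr o) g -> a = bpow beta0 betai0 (j * q) x ->
  o = bpow beta' betai' (j * p) y -> Good (inl a) (g ++ [:: linv e]).
Proof.
move=> [u [s [Hu [Hs Hg]]]] Ha Ho. exists (u ++ bword (j * q)); split.
  apply: walk_cat Hu _. rewrite Ha. exact: walk_bword.
have Hd : bpow beta' betai' (s - j * p) y = y.
  by rewrite bpowD // -Hs Ho bpowNK.
have HO' := HO Hu Hd.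
have HP := H_cat HH Hg HO'.
apply: Heq HP. rewrite winv_cat winv_bword.
have R := rel_mul Hrel (- j). rewrite !mulNr in R.
rewrite -catA.
apply: (bs_trans (v := g ++ [:: linv e] ++ ([:: e] ++ bword (- (j * p)) ++ [:: linv e]) ++ winv u)).
  apply: eqw_catl. apply: eqw_catl. apply: eqw_catr. exact: bs_sym.
apply: (bs_trans (v := g ++ bword (- (j * p)) ++ [:: linv e] ++ winv u)).
  rewrite -!catA. apply: eqw_catl.
  have := bs_cancel m n [::] (bword (- (j * p)) ++ [:: linv e] ++ winv u) (linv e).
  by rewrite linvK.
apply: bs_sym.
apply: (bs_trans (v := g ++ bword (- s) ++ [:: linv e] ++ (winv u ++ u) ++ [:: e] ++ bword (s - j * p) ++ [:: linv e] ++ winv u)).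
  by rewrite -!catA; apply: bs_refl.
apply: (bs_trans (v := g ++ bword (- s) ++ [:: linv e] ++ [::] ++ [:: e] ++ bword (s - j * p) ++ [:: linv e] ++ winv u)).
  apply: eqw_catl; apply: eqw_catl; apply: eqw_catl; apply: eqw_catr.
  exact: eqw_inv_l.
apply: (bs_trans (v := g ++ (bword (- s) ++ bword (s - j * p)) ++ [:: linv e] ++ winv u)).
  rewrite -!catA /=. apply: eqw_catl. apply: eqw_catl.
  have := bs_cancel m n [::] (bword (s - j * p) ++ [:: linv e] ++ winv u) (linv e).
  by rewrite linvK.
apply: eqw_catl. apply: eqw_catr. apply: bs_sym.
have := bwordD (m:=m) (n:=n) (- s) (s - j * p). by rewrite addrA addNr add0r.
Qed.

Lemma good_b o g : Good (inr o) g -> Good (inr (beta' o)) (g ++ [:: Lb]).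
Proof.
move=> [u [s [Hu [Hs Hg]]]]. exists u, (s + 1); split => //; split.
  by rewrite bpowS // Hs.
apply: Heq Hg. rewrite -catA.
have -> : - (s + 1) = -1 + - s by rewrite opprD addrC.
apply: (bs_trans (v := g ++ [:: Lb] ++ (bword (-1) ++ bword (- s)) ++ [:: linv e] ++ winv u)).
  apply: eqw_catl; apply: eqw_catl; apply: eqw_catr. exact: bwordD.
rewrite -!catA. have -> : bword (-1) = [:: Lbi] by [].
apply: eqw_catl. exact: (bs_cancel m n [::] _ Lb).
Qed.

Lemma good_bi o g : Good (inr o) g -> Good (inr (betai' o)) (g ++ [:: Lbi]).
Proof.
move=> [u [s [Hu [Hs Hg]]]]. exists u, (s - 1); split => //; split.
  by rewrite bpowP // Hs.
apply: Heq Hg. rewrite -catA.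
have -> : - (s - 1) = 1 + - s by rewrite opprB addrC.
apply: (bs_trans (v := g ++ [:: Lbi] ++ (bword 1 ++ bword (- s)) ++ [:: linv e] ++ winv u)).
  apply: eqw_catl; apply: eqw_catl; apply: eqw_catr. exact: bwordD.
rewrite -!catA. have -> : bword 1 = [:: Lb] by [].
apply: eqw_catl. exact: (bs_cancel m n [::] _ Lbi).
Qed.

Notation ebeta := (ext_beta beta0 beta').
Notation ebetai := (ext_betai betai0 betai').
Notation etau := (ext_tau m n beta0 betai0 tau0 beta' betai' x y eps).

Lemma good_walk P w Q : walk ebeta ebetai etau P w Q -> forall g, Good P g -> Good Q (g ++ w).
Proof.
elim=> {P w Q}.
- move=> P g; by rewrite cats0.
- move=> P w Q _ IH g HG. rewrite -cat1s catA. apply: IH. case: P HG => [z|o] HG /=.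
  + apply: good_old HG _. apply: walk_b. exact: walk_nil.
  + exact: good_b.
- move=> P w Q _ IH g HG. rewrite -cat1s catA. apply: IH. case: P HG => [z|o] HG /=.
  + apply: good_old HG _. apply: walk_bi. exact: walk_nil.
  + exact: good_bi.
- move=> P P' w Q Ht _ IH g HG. rewrite -cat1s catA. apply: IH.
  case: P P' Ht HG => [z|o] [z'|o'] Ht HG.
  + simpl in Ht. apply: good_old HG _. apply: walk_t Ht _. exact: walk_nil.
  + move: Ht => [E [j [Hz Ho]]].
    move: (good_fwd (z:=z) (o:=o') (g:=g) (j:=j) HG); rewrite E; move=> F; exact: (F Hz Ho).
  + move: Ht => [E [j [Ho Hz]]].
    move: (good_bwd (a:=z') (o:=o) (g:=g) (j:=j) HG); rewrite E; move=> F; exact: (F Hz Ho).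
  + by simpl in Ht.
- move=> P P' w Q Ht _ IH g HG. rewrite -cat1s catA. apply: IH.
  case: P P' Ht HG => [z|o] [z'|o'] Ht HG.
  + simpl in Ht. apply: good_old HG _. apply: walk_ti Ht _. exact: walk_nil.
  + move: Ht => [E [j [Ho Hz]]].
    move: (good_fwd (z:=z) (o:=o') (g:=g) (j:=j) HG); rewrite E; move=> F; exact: (F Hz Ho).
  + move: Ht => [E [j [Hz Ho]]].
    move: (good_bwd (a:=z') (o:=o) (g:=g) (j:=j) HG); rewrite E; move=> F; exact: (F Hz Ho).
  + by simpl in Ht.
Qed.

Lemma stab_in_H g : Stab m n ebeta ebetai etau (inl x0) g -> H g.
Proof.
move=> [w [Hw Eg]]. apply: (H_eq HH Eg).
have G0 : Good (inl x0) [::].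
  exists [::]; split; [exact: walk_nil | exact: H_nil HH].
have [u [Hu Hwu]] := good_walk Hw G0.
have Su : H u by apply: HS; exists u; split => //; exact: bs_refl.
have := H_cat HH Hwu Su. rewrite -catA /=. apply: (H_eq HH).
have := eqw_catl w (eqw_inv_l u). by rewrite cats0.
Qed.
End Main.


Section Conj.
Variables (m n : int) (H : word -> Prop) (HH : is_subgroup m n H).
Notation eqw := (bs_eq m n).
Definition cnj (u : word) (e : letter) (A : word) := u ++ [:: e] ++ A ++ [:: linv e] ++ winv u.

Lemma cnj_nil u e : H (cnj u e [::]).
Proof.
apply: (H_eq HH (u := [::])); last exact: H_nil HH.
apply: bs_sym. rewrite /cnj /=.
apply: (bs_trans (v := u ++ winv u)); last exact: eqw_inv_r.
apply: eqw_catl. exact: (bs_cancel m n [::] _ e).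
Qed.

Lemma cnj_cat u e A B : eqw (cnj u e A ++ cnj u e B) (cnj u e (A ++ B)).
Proof.
rewrite /cnj -!catA.
apply: (bs_trans (v := u ++ [:: e] ++ A ++ [:: linv e] ++ [::] ++ [:: e] ++ B ++ [:: linv e] ++ winv u)).
  do 4 apply: eqw_catl. rewrite catA. exact: (eqw_catr _ (eqw_inv_l u)).
rewrite /=. apply: eqw_catl. apply: (eqw_catl [:: e]). apply: eqw_catl.
have := bs_cancel m n [::] (B ++ [:: linv e] ++ winv u) (linv e). by rewrite linvK.
Qed.

Lemma cnj_winv u e A : winv (cnj u e A) = cnj u e (winv A).
Proof. by rewrite /cnj !winv_cat winvK /= /winv /= linvK -!catA. Qed.

Lemma cnj_pow u e (k : nat) : H (cnj u e (bword k)) -> forall Q : int, H (cnj u e (bword (Q * k%:Z))).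
Proof.
move=> Hk. elim/int_ind3.
- rewrite mul0r. exact: cnj_nil.
- move=> Q IH. rewrite mulrDl mul1r.
  apply: (H_eq HH (u := cnj u e (bword (Q * k%:Z) ++ bword k))).
    apply: bs_sym. rewrite /cnj. apply: eqw_catl. apply: eqw_catl. apply: eqw_catr. exact: bwordD.
  apply: (H_eq HH (@cnj_cat u e _ _)). exact: (@H_cat m n H HH _ _ IH Hk).
- move=> Q IH. rewrite mulrBl mul1r.
  apply: (H_eq HH (u := cnj u e (bword (Q * k%:Z) ++ bword (- k%:Z)))).
    apply: bs_sym. rewrite /cnj. apply: eqw_catl. apply: eqw_catl. apply: eqw_catr. exact: bwordD.
  apply: (H_eq HH (@cnj_cat u e _ _)). apply: (@H_cat m n H HH _ _ IH).
  rewrite -winv_bword -cnj_winv. exact: (@H_inv m n H HH _ Hk).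
Qed.
End Conj.

Section Ext.
Variables (m n : int) (X0 O : Type) (beta0 betai0 : X0 -> X0)
  (tau0 : X0 -> X0 -> Prop) (beta' betai' : O -> O) (x : X0) (y : O) (eps : bool).
Notation ebeta := (ext_beta beta0 beta').
Notation ebetai := (ext_betai betai0 betai').
Notation etau := (ext_tau m n beta0 betai0 tau0 beta' betai' x y eps).

Lemma walk_lift a w b : walk beta0 betai0 tau0 a w b -> walk ebeta ebetai etau (inl a) w (inl b).
Proof.
elim=> {a w b}.
- move=> z; exact: walk_nil.
- move=> z w z' _ IH. exact: walk_b.
- move=> z w z' _ IH. exact: walk_bi.
- move=> z z1 w z' Ht _ IH. exact: (walk_t (x' := inl z1)).
- move=> z z1 w z' Ht _ IH. exact: (walk_ti (x' := inl z1)).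
Qed.

Lemma iter_ebeta k o : iter k ebeta (inr o) = inr (iter k beta' o).
Proof. by elim: k => //= k ->. Qed.

Lemma ebetaK : cancel beta0 betai0 -> cancel beta' betai' -> cancel ebeta ebetai.
Proof. by move=> h1 h2 [a|o] /=; rewrite ?h1 ?h2. Qed.
Lemma ebetaiK : cancel betai0 beta0 -> cancel betai' beta' -> cancel ebetai ebeta.
Proof. by move=> h1 h2 [a|o] /=; rewrite ?h1 ?h2. Qed.
End Ext.

Lemma rel_eps (m n : int) (eps : bool) :
  bs_eq m n ([:: if eps then Lt else Lti] ++ bword (if eps then m else n) ++
     [:: linv (if eps then Lt else Lti)]) (bword (if eps then n else m)).
Proof.
case: eps; first exact: eqw_rel.
rewrite /=.
apply: (bs_trans (v := [:: Lti] ++ (Lt :: bword m ++ [:: Lti]) ++ [:: Lt])).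
  apply: (eqw_catl [:: Lti]). apply: eqw_catr. apply: bs_sym. exact: eqw_rel.
rewrite /= -catA /=.
apply: (bs_trans (v := bword m ++ [:: Lti; Lt])).
  exact: (bs_cancel m n [::] _ Lti).
have := bs_cancel m n (bword m) [::] Lti. rewrite /= !cats0 => h. exact: h.
Qed.

Lemma cnj_change (m n : int) u c e B :
  bs_eq m n ((u ++ winv c) ++ cnj c e B ++ (c ++ winv u)) (cnj u e B).
Proof.
rewrite /cnj -!catA. apply: eqw_catl.
rewrite catA. apply: (bs_trans (eqw_catr _ (eqw_inv_l c))). rewrite /=.
apply: (eqw_catl [:: e]). apply: eqw_catl. apply: (eqw_catl [:: linv e]).
rewrite catA. apply: (bs_trans (eqw_catr _ (eqw_inv_l c))). exact: bs_refl.
Qed.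

Lemma arith (p q : int) (a : nat) (Q : int) : (0 < a)%N ->
  exists J T : int, J * p = Q * ((`|p| * a) %/ gcdn a `|q|)%N%:Z /\ J * q = T * a%:Z.
Proof.
move=> a0.
set g := gcdn a `|q|.
have Ea : a = (a %/ g * g)%N by rewrite divnK // dvdn_gcdl.
have Eq : `|q|%N = (`|q| %/ g * g)%N by rewrite divnK // dvdn_gcdr.
have EK : ((`|p| * a) %/ g)%N = (`|p| * (a %/ g))%N by rewrite muln_divA // dvdn_gcdl.
rewrite EK.
have [s [Hs1 Hs]] : exists s : int, s * s = 1 /\ s * p = `|p|%N%:Z.
  case: (lerP 0 p) => hp.
  - exists 1; rewrite gez0_abs //; split; ring.
  - exists (-1); rewrite ltz0_abs //; split; ring.
have [t [Ht1 Ht]] : exists t : int, t * t = 1 /\ q = t * `|q|%N%:Z.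
  case: (lerP 0 q) => hq.
  - exists 1; rewrite gez0_abs //; split; ring.
  - exists (-1); rewrite ltz0_abs //; split; ring.
exists (Q * (a %/ g)%N%:Z * s), (Q * s * t * (`|q| %/ g)%N%:Z).
split.
- rewrite PoszM -Hs. ring.
- rewrite {1}Ht {1}Eq {2}Ea !PoszM. ring.
Qed.

Section Edges.
Variables (m n : int) (X0 O : Type) (beta0 betai0 : X0 -> X0)
  (tau0 : X0 -> X0 -> Prop) (beta' betai' : O -> O) (x : X0) (y : O) (eps : bool).
Notation ebeta := (ext_beta beta0 beta').
Notation ebetai := (ext_betai betai0 betai').
Notation etau := (ext_tau m n beta0 betai0 tau0 beta' betai' x y eps).

Lemma edge_fwd : walk ebeta ebetai etau (inl x) [:: if eps then Lt else Lti] (inr y).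
Proof.
case E: eps.
- apply: (walk_t (x' := inr y)); last exact: walk_nil.
  rewrite /=; split => //; exists 0%R; rewrite !mul0r; split => //.
- apply: (walk_ti (x' := inr y)); last exact: walk_nil.
  rewrite /=; split => //; exists 0%R; rewrite !mul0r; split => //.
Qed.

Lemma edge_bwd : walk ebeta ebetai etau (inr y) [:: if eps then Lti else Lt] (inl x).
Proof.
case E: eps.
- apply: (walk_ti (x' := inl x)); last exact: walk_nil.
  rewrite /=; split => //; exists 0%R; rewrite !mul0r; split => //.
- apply: (walk_t (x' := inl x)); last exact: walk_nil.
  rewrite /=; split => //; exists 0%R; rewrite !mul0r; split => //.
Qed.
End Edges.

Lemma Ee_lem (eps : bool) : linv (if eps then Lt else Lti) = (if eps then Lti else Lt).
Proof. by case: eps. Qed.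
Lemma EK_lem (eps : bool) (m n : int) (a : nat) :
  (if eps then (`|m| * a) %/ gcdn a `|n| else (`|n| * a) %/ gcdn a `|m|)%N =
      ((`| if eps then m else n | * a) %/ gcdn a `| if eps then n else m|)%N.
Proof. by case: eps. Qed.

End Helpers.
Import Helpers.
Unset Implicit Arguments. Set Strict Implicit. Set Printing Implicit Defensive.

Import GRing.Theory Num.Theory.
Theorem mainTheorem11
  (m n : int) (hm : (2 <= `|m|)%N) (hn : (2 <= `|n|)%N)
  (X0 : Type) (beta0 betai0 : X0 -> X0) (tau0 : X0 -> X0 -> Prop)
  (Halpha0 : is_preaction m n beta0 betai0 tau0)
  (Hnsat : ~ saturated tau0)
  (r : ccard -> bool -> ccard) (Hr : transfer_rule m n r)
  (x : X0) (Lx : ccard) (HLx : orbit_card beta0 betai0 x Lx)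
  (eps : bool)
  (Hfree : if eps then ~ pdom tau0 x else ~ prng tau0 x)
  (O : Type) (beta' betai' : O -> O) (y : O) (Ly : ccard)
  (Hb'1 : cancel beta' betai') (Hb'2 : cancel betai' beta')
  (Htrans : forall o : O, exists k : int, o = bpow beta' betai' k y)
  (HLy : orbit_card beta' betai' y Ly)
  (HLyr : Ly = r Lx eps)
  (x0 : X0) (c : word) (Hc : walk beta0 betai0 tau0 x0 c x) :
  let beta := ext_beta beta0 beta' in
  let betai := ext_betai betai0 betai' in
  let tau := ext_tau m n beta0 betai0 tau0 beta' betai' x y eps in
  (forall k : nat, Ly = Fin k ->
     forall g : word,
       Stab m n beta betai tau (inl x0) g <->
       gen_sub m n (Stab m n beta0 betai0 tau0 x0)
         (c ++ [:: if eps then Lt else Lti] ++ nseq k Lb ++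
          [:: if eps then Lti else Lt] ++ winv c) g)
  /\
  ((Ly = Inf \/
    (exists a : nat, Lx = Fin a /\
       Ly = Fin (if eps then (`|m| * a) %/ gcdn a `|n| else (`|n| * a) %/ gcdn a `|m|))) ->
   forall g : word,
     Stab m n beta betai tau (inl x0) g <-> Stab m n beta0 betai0 tau0 x0 g).
Proof.
move=> beta betai tau. clear Hfree Hnsat HLyr Hr Htrans.
case: Halpha0 => [[fK0 gK0 _ _] _].
have fK := ebetaK fK0 Hb'1. have gK := ebetaiK gK0 Hb'2.
have S0 := Stab_sub tau0 fK0 gK0 m n x0.
have SE := Stab_sub tau fK gK m n (inl x0).
have Hrel := rel_eps m n eps.
have Ee := Ee_lem eps.
have lift : forall g, Stab m n beta0 betai0 tau0 x0 g -> Stab m n beta betai tau (inl x0) g.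
  move=> g [w [Hw Eg]]. exists w; split => //. exact: walk_lift.
split.
- move=> k Hk g; split.
  + move=> Hst H HH HS Hh.
    apply: (stab_in_H fK0 gK0 Hb'1 Hb'2 HH HS Hrel _ Hst).
    move=> u d Hu Hd.
    move: HLy; rewrite Hk => HLk.
    have [Q ->] := orbit_fin Hb'1 Hb'2 HLk Hd.
    apply: (cnj_pow HH _ Q).
    have Huc : H (u ++ winv c).
      apply: HS. exists (u ++ winv c); split; last exact: bs_refl.
      apply: walk_cat Hu _. exact: walk_rev.
    have Hcu : H (c ++ winv u).
      have := H_inv HH Huc. by rewrite winv_cat winvK.
    apply: (H_eq HH (cnj_change m n u c _ _)).
    apply: (H_cat HH Huc). apply: (H_cat HH _ Hcu).
    rewrite /cnj Ee. exact: Hh.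
  + move=> Hgen. apply: Hgen => //.
    move: HLy; rewrite Hk => -[_ [Hyk _]].
    exists (c ++ [:: if eps then Lt else Lti] ++ nseq k Lb ++
          [:: if eps then Lti else Lt] ++ winv c); split; last exact: bs_refl.
    apply: walk_cat; first exact: walk_lift Hc.
    have Hl : walk beta betai tau (inr y) (nseq k Lb ++ [:: if eps then Lti else Lt] ++ winv c) (inl x0).
      apply: (walk_cat (b := inr y)).
        have := walk_nseqb beta betai tau k (inr y).
        by rewrite /beta iter_ebeta Hyk.
      apply: (walk_cat (b := inl x)); last exact: walk_lift (walk_rev fK0 gK0 Hc).
      exact: edge_bwd.
    apply: walk_cat Hl. exact: edge_fwd.
- move=> Hcase g; split; last exact: lift.
  move=> Hst. apply: (stab_in_H fK0 gK0 Hb'1 Hb'2 S0 (fun s h => h) Hrel _ Hst).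
  move=> u d Hu Hd.
  case: Hcase => [HI | [a [Ha HK]]].
  + move: HLy; rewrite HI /= => HInf.
    have -> : d = 0%R.
      case: (eqVneq d 0%R) => // dn0. by case: (HInf d dn0).
    exact: (cnj_nil S0).
  + move: HLy HLx; rewrite HK Ha => HLk [a0 [Hxa _]].
    have [Q ->] := orbit_fin Hb'1 Hb'2 HLk Hd.
    rewrite EK_lem.
    have [J [T [HJ HT]]] := arith (if eps then m else n) (if eps then n else m) Q a0.
    rewrite -HJ.
    apply: (H_eq S0 (u := u ++ bword (J * (if eps then n else m))%R ++ winv u)).
      apply: bs_sym. rewrite catA. apply: (bs_trans (v := (u ++ bword (J * (if eps then n else m))%R) ++ winv u)).
        rewrite -!catA. apply: eqw_catl. rewrite !catA. apply: eqw_catr. rewrite -!catA.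
        exact: rel_mul Hrel J.
      rewrite -catA. exact: bs_refl.
    exists (u ++ bword (J * (if eps then n else m))%R ++ winv u); split; last exact: bs_refl.
    have Hu2 := walk_rev fK0 gK0 Hu. apply: walk_cat Hu _. apply: (walk_cat (b := x)); last exact: Hu2.
    have := walk_bword beta0 betai0 tau0 (J * (if eps then n else m))%R x.
    by rewrite HT (bpow_mul fK0 gK0 a0 Hxa).
Qed.
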